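(* There is an absolute constant $c$ such that for every integer $n\ge 2$ there exists an integer $d$ with $1\le d\le n-1$ and $\gcd(n,d)=1$ such that $s(n,d)\le c\,\frac{n}{\phi(n)}\log n\,\log\log n$.
   Context: $\phi$ is Euler's totient function; logarithms are natural. For positive integers $n,d$, the Euclidean algorithm sets $a_0=n$, $a_1=d$, and for $k\ge1$, as long as $a_k\neq 0$, defines $a_{k+1}$ as the remainder of $a_{k-1}$ upon division by $a_k$ and $q_k$ as the positive integer with $a_{k-1}=q_ka_k+a_{k+1}$; it stops at the first $\ell$ with $a_\ell=0$. The quotient sequence is $\mathbf{q}(n,d)=(q_1,\dots,q_{\ell-1})$, and $s(n,d)=q_1+\dots+q_{\ell-1}$ is the sum of the quotients. *)

(* Defs.v *)
From mathcomp Require Import all_boot.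

(* Sum of partial quotients of the Euclidean algorithm on (a, b):
   s(a,0) = 0, s(a,b) = a %/ b + s(b, a %% b) for b > 0.
   Implemented with fuel; fuel >= b suffices since the second argument
   strictly decreases. *)
Fixpoint quot_sum_fuel (fuel a b : nat) : nat :=
  match fuel with
  | 0 => 0
  | fuel'.+1 => if b == 0 then 0 else a %/ b + quot_sum_fuel fuel' b (a %% b)
  end.

Definition s (n d : nat) : nat := quot_sum_fuel d.+1 n d.

Example s_test1 : s 7 3 = 5. Proof. reflexivity. Qed.
Example s_test2 : s 13 5 = 6. Proof. reflexivity. Qed.

(* Main.v *)
Require Import Defs.
From mathcomp Require Import all_boot zify.
From Stdlib Require Import Reals ZArith Lia Lra.

Set Implicit Arguments. Unset Strict Implicit.

Lemma fiber_core (n p1 p2 x1 x2 a1 b1 a2 b2 : nat) (sg : bool) :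
  n = p1*x1 + p2*x2 ->
  (if sg then p1 * b1 = p2 * a1 + 1 else p2 * a1 = p1 * b1 + 1) ->
  (if sg then p1 * b2 = p2 * a2 + 1 else p2 * a2 = p1 * b2 + 1) ->
  0 < p1 -> a1*x1 + b1*x2 < n -> a2*x1 + b2*x2 < n ->
  a1*x1 + b1*x2 = a2*x1 + b2*x2.
Proof.
move=> En D1 D2 Hp H1 H2.
have [s [Hs1 Hs2 Hs3]] : exists s : Z, [/\ (s*s = 1)%Z,
   (Z.of_nat p1 * Z.of_nat b1 - Z.of_nat p2 * Z.of_nat a1 = s)%Z &
   (Z.of_nat p1 * Z.of_nat b2 - Z.of_nat p2 * Z.of_nat a2 = s)%Z].
  case: sg D1 D2 => D1 D2; [exists 1%Z | exists (-1)%Z]; split; lia.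
set P1 := Z.of_nat p1 in Hs2 Hs3 *. set P2 := Z.of_nat p2 in Hs2 Hs3 *.
set A1 := Z.of_nat a1 in Hs2 Hs3 *. set A2 := Z.of_nat a2 in Hs2 Hs3 *.
set B1 := Z.of_nat b1 in Hs2 Hs3 *. set B2 := Z.of_nat b2 in Hs2 Hs3 *.
have E1 : (P1 * (B1 - B2) = P2 * (A1 - A2))%Z by lia.
set t := (s * ((A1 - A2) * B1 - (B1 - B2) * A1))%Z.
have Hd : (A1 - A2 = P1 * t)%Z.
  have -> : (P1 * t = s * ((A1 - A2) * (P1 * B1) - (P1 * (B1 - B2)) * A1))%Z by rewrite /t; ring.
  rewrite E1.
  have -> : (s * ((A1 - A2) * (P1 * B1) - P2 * (A1 - A2) * A1) = (s * (P1 * B1 - P2 * A1)) * (A1 - A2))%Z by ring.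
  rewrite Hs2 Hs1; ring.
have He : (B1 - B2 = P2 * t)%Z.
  have HP : (P1 <> 0)%Z by rewrite /P1; lia.
  apply: (Z.mul_reg_l _ _ P1 HP). rewrite E1 Hd; ring.
have Hdiff : (Z.of_nat (a1*x1 + b1*x2) - Z.of_nat (a2*x1 + b2*x2) = t * Z.of_nat n)%Z.
  rewrite En !Nat2Z.inj_add !Nat2Z.inj_mul.
  rewrite -/P1 -/P2 -/A1 -/A2 -/B1 -/B2.
  have -> : (A1 * Z.of_nat x1 + B1 * Z.of_nat x2 - (A2 * Z.of_nat x1 + B2 * Z.of_nat x2)
    = (A1 - A2) * Z.of_nat x1 + (B1 - B2) * Z.of_nat x2)%Z by ring.
  rewrite Hd He; ring.
have HN1 : (Z.of_nat (a1*x1 + b1*x2) < Z.of_nat n)%Z by lia.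
have HN2 : (Z.of_nat (a2*x1 + b2*x2) < Z.of_nat n)%Z by lia.
move: Hdiff HN1 HN2.
set DD1 := Z.of_nat (a1*x1 + b1*x2). set DD2 := Z.of_nat (a2*x1 + b2*x2).
set N := Z.of_nat n.
have : (0 <= DD1)%Z by lia. have : (0 <= DD2)%Z by lia.
move=> h1 h2 Hdiff HN1 HN2.
have t0 : t = 0%Z.
  case: (Z.lt_trichotomy t 0) => [ht|[//|ht]].
  - have hN : (0 <= N)%Z by lia.
    have : (t * N <= - N)%Z by clear -ht hN; nia. lia.
  - have hN : (0 <= N)%Z by lia.
    have : (N <= t * N)%Z by clear -ht hN; nia. lia.
rewrite t0 in Hdiff. apply: Nat2Z.inj. rewrite -/DD1 -/DD2. lia.
Qed.

Fixpoint qlist (f x y : nat) : seq nat :=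
  if f is f'.+1 then (if y == 0 then [::] else x %/ y :: qlist f' y (x %% y)) else [::].

Lemma qsum_qlist f x y : quot_sum_fuel f x y = sumn (qlist f x y).
Proof. elim: f x y => [//|f IH] x y /=. case: (y == 0) => //=. by rewrite IH. Qed.

Lemma qlist_le f x y : forall q, q \in qlist f x y -> q <= maxn x y.
Proof.
elim: f x y => [//|f IH] x y q /=. case: eqP => // /eqP y0.
rewrite inE => /orP [/eqP ->|/IH H].
  by apply: leq_trans (leq_div _ _) (leq_maxl _ _).
apply: leq_trans H _. have H1 : x %% y < y by rewrite ltn_mod lt0n.
rewrite (maxn_idPl (ltnW H1)). exact: leq_maxr.
Qed.

Definition key := (bool * bool * nat * nat * nat)%type.

Fixpoint run (j U f x y u v u' v' : nat) (sg : bool) : seq key :=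
  if f is f'.+1 then
    if y == 0 then [::] else
    let t := run j U f' y (x %% y) (u * (x %/ y) + v) u (u' * (x %/ y) + v') u' (~~ sg) in
    if j <= x %/ y then
      (if u <= U then (true, sg, u, v, y) else (false, ~~ sg, y, x %% y, u)) :: t
    else t
  else [::].

Lemma run_size j U f x y u v u' v' sg :
  size (run j U f x y u v u' v' sg) = count (fun q => j <= q) (qlist f x y).
Proof.
elim: f x y u v u' v' sg => [//|f IH] x y u v u' v' sg /=.
case: (y == 0) => //=. case: (j <= x %/ y) => /=; by rewrite IH.
Qed.

Definition kproj (k : key) : nat := let: (cs, sg, a, b, e) := k in if cs then e else a.

Lemma run_proj j U f x y u v u' v' sg :
  forall k, k \in run j U f x y u v u' v' sg -> kproj k <= y.
Proof.
elim: f x y u v u' v' sg => [//|f IH] x y u v u' v' sg k /=.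
case: eqP => // /eqP y0.
have Hr : x %% y < y by rewrite ltn_mod lt0n.
have Ht : k \in run j U f y (x %% y) (u * (x %/ y) + v) u (u' * (x %/ y) + v') u' (~~ sg) -> kproj k <= y.
  by move/IH => H; apply: ltnW; apply: leq_ltn_trans H Hr.
case: (j <= x %/ y) => //. rewrite inE => /orP [/eqP ->|//].
by case: (u <= U).
Qed.

Lemma run_uniq j U f x y u v u' v' sg : uniq (run j U f x y u v u' v' sg).
Proof.
elim: f x y u v u' v' sg => [//|f IH] x y u v u' v' sg /=.
case: eqP => // /eqP y0.
have Hr : x %% y < y by rewrite ltn_mod lt0n.
case: (j <= x %/ y) => //=. rewrite IH andbT.
apply/negP => /run_proj H.
move: H. case: (u <= U) => /= H; move: (leq_ltn_trans H Hr); by rewrite ltnn.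
Qed.

Definition det (sg : bool) (p1 p2 a b : nat) :=
  if sg then p1 * b = p2 * a + 1 else p2 * a = p1 * b + 1.

Definition KeyOK (n d j U : nat) (k : key) : Prop :=
  let: (cs, sg, a, b, e) := k in
  [/\ [/\ 0 < a, a <= U, b <= a & coprime a b], 0 < e, e <= n,
    (exists c, [/\ c <= n, a*c + b*e = n & j*e <= c]) &
    exists p1 p2 x1 x2 a' b', [/\ n = p1*x1 + p2*x2, d = a'*x1 + b'*x2, det sg p1 p2 a' b',
       0 < p1 /\ 0 < x1 & (if cs then (a, b, e) = (p1, p2, x2) else (a, b, e) = (x1, x2, p2))]].

Lemma det_coprime sg p1 p2 a b : det sg p1 p2 a b -> coprime p1 p2.
Proof.
rewrite /det /coprime => H. apply/eqP.
have Hg1 : gcdn p1 p2 %| p1 * b by apply: dvdn_mulr; apply: dvdn_gcdl.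
have Hg2 : gcdn p1 p2 %| p2 * a by apply: dvdn_mulr; apply: dvdn_gcdr.
case: sg H => H.
- have : gcdn p1 p2 %| 1 by rewrite -(dvdn_addr _ Hg2) -H.
  by rewrite dvdn1 => /eqP.
- have : gcdn p1 p2 %| 1 by rewrite -(dvdn_addr _ Hg1) -H.
  by rewrite dvdn1 => /eqP.
Qed.

Lemma run_ok n d j U f x y u v u' v' sg :
  0 < j -> n <= U * U * j ->
  n = u*x + v*y -> d = u'*x + v'*y -> det sg u v u' v' -> 0 < u -> v <= u -> y <= x ->
  coprime x y ->
  forall k, k \in run j U f x y u v u' v' sg -> KeyOK n d j U k.
Proof.
move=> Hj HU.
elim: f x y u v u' v' sg => [//|f IH] x y u v u' v' sg En Ed Hdet Hu Hvu Hyx Hco k /=.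
case: eqP => // /eqP y0.
have y0' : 0 < y by rewrite lt0n.
set q := x %/ y. set r := x %% y.
have Ex : x = q * y + r by rewrite /q /r -divn_eq.
have Hr : r < y by rewrite ltn_mod.
have Hq : 0 < q by rewrite /q divn_gt0.
have Hxn : x <= n by rewrite En; nia.
have Hrec : k \in run j U f y r (u * q + v) u (u' * q + v') u' (~~ sg) -> KeyOK n d j U k.
  apply: IH.
  - rewrite En Ex; nia.
  - rewrite Ed Ex; nia.
  - move: Hdet; rewrite /det; case: sg => /= H; nia.
  - nia.
  - nia.
  - exact: ltnW.
  - by rewrite /r coprime_sym coprime_modl.
case: ifP => Hjq; last exact: Hrec.
rewrite inE => /orP [/eqP ->|]; last exact: Hrec.
have Hjy : j * y <= x by rewrite -leq_divRL.
case: ifP => HuU.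
- split => //.
  + split => //. exact: det_coprime Hdet.
  + by apply: leq_trans Hyx Hxn.
  + by exists x.
  + by exists u, v, x, y, u', v'; split => //; split => //; apply: leq_trans y0' Hyx.
- have HyU : y <= U.
    rewrite leqNgt; apply/negP => Hy.
    have HU' : U < u by rewrite ltnNge HuU.
    have : (U.+1) * (U.+1) * j <= n.
      rewrite En. have : U.+1 * j <= u * q by apply: leq_mul.
      have : U.+1 * q * y <= u * x by rewrite Ex; nia.
      nia.
    nia.
  split => //.
  + split => //; first exact: ltnW.
    by rewrite /r coprime_sym coprime_modl.
  + rewrite En; nia.
  + exists (u * q + v); split.
    * rewrite En Ex; nia.
    * rewrite En Ex; nia.
    * nia.
  + exists (u * q + v), u, y, r, (u' * q + v'), u'; split => //.
    * rewrite En Ex; nia.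
    * rewrite Ed Ex; nia.
    * clear Hrec; move: Hdet; rewrite /det; case: sg => /= H; nia.
    * split; nia.
Qed.

Lemma key_fiber n d1 d2 j U k :
  KeyOK n d1 j U k -> KeyOK n d2 j U k -> d1 < n -> d2 < n -> d1 = d2.
Proof.
case: k => [[[[cs sg] a] b] e]; rewrite /KeyOK /=.
move=> [_ _ _ _ [p1 [p2 [x1 [x2 [a1 [b1 [En1 Ed1 Hd1 [Hp1 Hx1] Hc1]]]]]]]].
move=> [_ _ _ _ [q1 [q2 [y1 [y2 [a2 [b2 [En2 Ed2 Hd2 [Hq1 Hy1] Hc2]]]]]]]].
move=> H1 H2.
case: cs Hc1 Hc2 => [] [Ea1 Eb1 Ee1] [Ea2 Eb2 Ee2].
- have E1 : q1 = p1 by lia. have E2 : q2 = p2 by lia. have E3 : y2 = x2 by lia.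
  subst q1 q2 y2.
  have Ex : y1 = x1 by nia.
  subst y1. rewrite Ed1 Ed2 in H1 H2 *. rewrite ?Ex ?E1 ?E2 ?E3 in H2 Hd2 *. exact: (fiber_core En1 Hd1 Hd2 Hp1 H1 H2).
- have E1 : y1 = x1 by lia. have E2 : y2 = x2 by lia. have E3 : q2 = p2 by lia.
  subst y1 y2 q2.
  have Ex : q1 = p1 by nia.
  subst q1. rewrite Ed1 Ed2 in H1 H2 *. rewrite ?Ex ?E1 ?E2 ?E3 in H2 Hd2 *. exact: (fiber_core En1 Hd1 Hd2 Hp1 H1 H2).
Qed.

Definition qs (n d : nat) := qlist d.+1 n d.
Definition Ld (j U n d : nat) := run j U d.+1 n d 1 0 0 1 true.

Lemma Ld_size j U n d : size (Ld j U n d) = count (fun q => j <= q) (qs n d).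
Proof. exact: run_size. Qed.

Lemma Ld_ok j U n d : 0 < j -> n <= U * U * j -> d < n -> coprime n d ->
  forall k, k \in Ld j U n d -> KeyOK n d j U k.
Proof.
move=> Hj HU Hd Hco. apply: run_ok => //; rewrite ?mul1n ?mul0n ?add0n ?addn0 //.
exact: ltnW.
Qed.

Definition KT (U n : nat) := (bool * bool * 'I_U.+1 * 'I_U.+1 * 'I_n.+1)%type.
Definition emb U n (k : KT U n) : key :=
  (k.1.1.1.1, k.1.1.1.2, nat_of_ord k.1.1.2, nat_of_ord k.1.2, nat_of_ord k.2).

Lemma size_le_card n d j U (L : seq key) :
  (forall k, k \in L -> KeyOK n d j U k) -> uniq L ->
  size L <= #|[pred k : KT U n | emb k \in L]|.
Proof.
move=> Hok Hu. rewrite cardE -(size_map (@emb U n)).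
apply: uniq_leq_size => // x Hx.
have := Hok x Hx. case: x Hx => [[[[cs sg] a] b] e] Hx [[Ha HaU Hba _] _ Hen _ _].
have HaU' : a < U.+1 by [].
have HbU : b < U.+1 by apply: leq_ltn_trans Hba _.
have Hen' : e < n.+1 by [].
apply/mapP. exists (cs, sg, inord a, inord b, inord e).
  by rewrite mem_enum inE /emb /= !inordK.
by rewrite /emb /= !inordK.
Qed.

Definition Wb (n j a b e : nat) : bool :=
  [&& 0 < a, b <= a, coprime a b, 0 < e & [exists c : 'I_n.+1, (a * c + b * e == n) && (j * e <= c)]].

Lemma KeyOK_Wb n d j U cs sg a b e : KeyOK n d j U (cs, sg, a, b, e) -> Wb n j a b e.
Proof.
move=> [[Ha _ Hba Hco] He _ [c [Hc Ec Hjc]] _].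
rewrite /Wb Ha Hba Hco He /=. apply/existsP. exists (Ordinal (n:=n.+1) (m:=c) Hc) => /=.
by rewrite Ec eqxx Hjc.
Qed.

Lemma sum_fiber j U n (k : KT U n) : 0 < j -> n <= U * U * j ->
  \sum_(d < n | coprime n d) (emb k \in Ld j U n d : nat) <= Wb n j k.1.1.2 k.1.2 k.2.
Proof.
move=> Hj HU.
have -> : \sum_(d < n | coprime n d) (emb k \in Ld j U n d : nat) =
          #|[pred d : 'I_n | coprime n d && (emb k \in Ld j U n d)]|.
  rewrite -sum1_card big_mkcond [RHS]big_mkcond. apply: eq_bigr => d _ /=.
  rewrite inE /=; case: (coprime n d) => //=; by case: (_ \in _).
case HW : (Wb _ _ _ _ _).
  apply/card_le1_eqP => d1 d2 /andP [Hc1 H1] /andP [Hc2 H2].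
  apply: val_inj => /=.
  exact: (key_fiber (Ld_ok Hj HU (ltn_ord d2) Hc2 H2) (Ld_ok Hj HU (ltn_ord d1) Hc1 H1) (ltn_ord d2) (ltn_ord d1)).
rewrite leqn0. apply/eqP. apply: eq_card0 => d /=. apply/negP => /andP [Hc H].
have := Ld_ok Hj HU (ltn_ord d) Hc H.
case: k HW H => [[[[cs sg] a] b] e] /= HW H /KeyOK_Wb. by rewrite HW.
Qed.

Lemma sum_card (T : finType) (P : pred T) : \sum_(i : T) (P i : nat) = #|P|.
Proof.
rewrite -sum1_card [RHS]big_mkcond /=. apply: eq_bigr => i _. by rewrite -topredE /=; case: (P i).
Qed.

Lemma e_inj_aux a b c1 c2 e1 e2 : 0 < a -> coprime a b -> e2 <= e1 ->
  a * c1 + b * e1 = a * c2 + b * e2 -> e1 %/ a = e2 %/ a -> e1 = e2.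
Proof.
move=> Ha Hco Hle E Ed.
have Hm : b * (e1 - e2) = a * (c2 - c1) by nia.
have : a %| e1 - e2 by rewrite -(Gauss_dvdr _ Hco) Hm dvdn_mulr.
case/dvdnP => t Ht.
have He1 : e1 = t * a + e2 by lia.
move: Ed. rewrite He1 divnMDl // => Ed.
have t0 : t = 0 by lia.
by rewrite t0 mul0n add0n.
Qed.

Lemma e_count n j a b : 0 < a -> coprime a b -> 0 < j ->
  \sum_(e < n.+1) (Wb n j a b e : nat) <= ((n %/ (j * a)) %/ a).+1.
Proof.
move=> Ha Hco Hj.
rewrite (sum_card (fun e : 'I_n.+1 => Wb n j a b e)).
set E := (n %/ (j * a)) %/ a.
have Hbnd : forall e : 'I_n.+1, Wb n j a b e -> e %/ a < E.+1.
  move=> e /and5P [_ _ _ _ /existsP [c /andP [/eqP Ec Hjc]]].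
  rewrite ltnS /E. apply: leq_div2r. rewrite leq_divRL; last by rewrite muln_gt0 Hj Ha.
  nia.
rewrite -[E.+1]card_ord.
apply: (@leq_card_in _ _ (fun e : 'I_n.+1 => (inord (e %/ a) : 'I_E.+1))).
move=> e1 e2. rewrite -!topredE /= => H1 H2 Hf.
have Hq : e1 %/ a = e2 %/ a.
  by move/(congr1 val): Hf; rewrite /= !inordK //; apply: Hbnd.
move: H1 H2 => /and5P [_ _ _ _ /existsP [c1 /andP [/eqP E1 _]]]
               /and5P [_ _ _ _ /existsP [c2 /andP [/eqP E2 _]]].
apply: val_inj => /=.
case: (leqP e2 e1) => Hle.
- apply: (e_inj_aux (c1 := c1) (c2 := c2) Ha Hco Hle) => //. by rewrite E1 E2.
- apply/esym. apply: (e_inj_aux (c1 := c2) (c2 := c1) Ha Hco (ltnW Hle)) => //. by rewrite E1 E2.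
Qed.

Lemma count_le_a U a : \sum_(b < U.+1) (b <= a : nat) <= a.+1.
Proof.
rewrite (sum_card (fun b : 'I_U.+1 => b <= a)).
rewrite -[a.+1]card_ord.
apply: (@leq_card_in _ _ (fun b : 'I_U.+1 => (inord b : 'I_a.+1))).
move=> b1 b2. rewrite -!topredE /= => H1 H2 Hf.
apply: val_inj. move/(congr1 val): Hf. by rewrite /= !inordK.
Qed.

Lemma inner_bound n j U (a : 'I_U.+1) : 0 < j ->
  \sum_(b < U.+1) \sum_(e < n.+1) (Wb n j a b e : nat) <= a.+1 * ((n %/ (j * a)) %/ a).+1.
Proof.
move=> Hj.
set c := ((n %/ (j * a)) %/ a).+1.
apply: (@leq_trans (\sum_(b < U.+1) (b <= a) * c)).
  apply: leq_sum => b _.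
  case Hc : [&& 0 < a, b <= a & coprime a b].
    move/and3P: Hc => [Ha Hb Hco]. rewrite Hb mul1n. exact: e_count.
  suff -> : \sum_(e < n.+1) (Wb n j a b e : nat) = 0 by [].
  apply/eqP. rewrite sum_nat_eq0. apply/forallP => e. apply/implyP => _.
  rewrite eqb0 /Wb. apply/negP => /and5P [H1 H2 H3 _ _]. by rewrite H1 H2 H3 in Hc.
rewrite -big_distrl /= leq_pmul2r //. exact: count_le_a.
Qed.

Lemma S_bound n j U : 0 < j -> n <= U * U * j ->
  \sum_(d < n | coprime n d) count (fun q => j <= q) (qs n d) <=
  4 * \sum_(a < U.+1) a.+1 * ((n %/ (j * a)) %/ a).+1.
Proof.
move=> Hj HU.
apply: (@leq_trans (\sum_(d < n | coprime n d) #|[pred k : KT U n | emb k \in Ld j U n d]|)).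
  apply: leq_sum => d Hd. rewrite -(Ld_size j U n d). apply: size_le_card.
  - exact: (Ld_ok Hj HU (ltn_ord d) Hd).
  - exact: run_uniq.
rewrite (eq_bigr (fun d : 'I_n => \sum_(k : KT U n) (emb k \in Ld j U n d : nat))); last first.
  move=> d _. by rewrite (sum_card (fun k : KT U n => emb k \in Ld j U n d)).
rewrite exchange_big /=.
apply: (@leq_trans (\sum_(k : KT U n) Wb n j k.1.1.2 k.1.2 k.2)).
  apply: leq_sum => k _. exact: sum_fiber.
have -> : \sum_(k : KT U n) Wb n j k.1.1.2 k.1.2 k.2 =
   \sum_(c : bool) \sum_(s : bool) \sum_(a < U.+1) \sum_(b < U.+1) \sum_(e < n.+1) (Wb n j a b e : nat).
  by rewrite !pair_bigA.
rewrite !big_bool /=.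
set X := \sum_(a < U.+1) _.
have -> : X + X + (X + X) = 4 * X by lia.
rewrite leq_pmul2l //. apply: leq_sum => a _. exact: inner_bound.
Qed.

Lemma chain_prod (s : seq nat) (m : nat) : path ltn m.+1 s ->
  m.+1 * \prod_(p <- s) p <= (m.+1 + size s) * \prod_(p <- s) p.-1.
Proof.
elim: s m => [|p s IH] m /=; first by rewrite !big_nil addn0.
move=> /andP [Hp Hs].
have Hp2 : 2 <= p by apply: leq_ltn_trans Hp.
have IH' := IH p.-1. rewrite prednK in IH'; last by apply: leq_trans Hp2.
have {IH'} IH' := IH' Hs.
rewrite !big_cons.
set A := \prod_(q <- s) q in IH' *. set B := \prod_(q <- s) q.-1 in IH' *.
set k := size s in IH' *.
have Hp' : p.-1.+1 = p by rewrite prednK //; apply: leq_trans Hp2.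
have : m.+1 * (p * A) <= m.+1 * ((p + k) * B) by rewrite leq_mul2l IH' orbT.
move=> H1. apply: (leq_trans H1).
rewrite mulnA [in X in _ <= X]mulnA. apply: leq_mul => //.
rewrite -Hp'. rewrite -Hp' in Hp. nia.
Qed.

Lemma pow2_prod (s : seq nat) : all (fun p => 2 <= p) s -> expn 2 (size s) <= \prod_(p <- s) p.
Proof.
elim: s => [|p s IH]; first by rewrite big_nil.
move=> /andP [Hp Hs]. rewrite big_cons (_ : size (p :: s) = (size s).+1) // expnS. apply: leq_mul => //. exact: IH.
Qed.

Lemma totient_lower n : 0 < n -> n <= totient n * (trunc_log 2 n).+1.
Proof.
move=> Hn.
set P := primes n.
have HP2 : all (fun p => 2 <= p) P.
  apply/allP => p. rewrite mem_primes => /and3P [Hp _ _]. exact: prime_gt1.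
have Hn' : n = \prod_(p <- P) expn p (logn p n).
  by rewrite {1}(prod_prime_decomp Hn) prime_decompE big_map.
have Htot : totient n * \prod_(p <- P) p = n * \prod_(p <- P) p.-1.
  rewrite totientE // -/P -big_split /= [in RHS]Hn' [RHS]mulnC -big_split /=.
  rewrite big_seq [RHS]big_seq. apply: eq_bigr => p Hp.
  have He : 0 < logn p n by rewrite logn_gt0.
  by rewrite -mulnA -expnSr prednK.
have Hchain : \prod_(p <- P) p <= (size P).+1 * \prod_(p <- P) p.-1.
  have := @chain_prod P 0. rewrite mul1n add1n. apply.
  rewrite /P. case E: (primes n) => [//|p s] /=.
  have := sorted_primes n. rewrite E /= => ->. rewrite andbT.
  have : p \in primes n by rewrite E inE eqxx.
  rewrite mem_primes => /and3P [Hp _ _]. exact: prime_gt1.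
have Hpos : 0 < \prod_(p <- P) p.-1.
  move: HP2; clear; elim: P => [|p s IH]; first by rewrite big_nil.
  rewrite big_cons => /andP [Hp Hs]. rewrite muln_gt0 IH // andbT.
  by case: p Hp => [|[|p]].
have Hom : size P <= trunc_log 2 n.
  apply: trunc_log_max => //. apply: leq_trans (pow2_prod HP2) _.
  rewrite [X in _ <= X]Hn' big_seq [X in _ <= X]big_seq. apply: leq_prod => p Hp.
  rewrite -{1}(expn1 p). apply: leq_pexp2l.
    by move/allP: HP2 => /(_ p Hp) /ltnW.
  by rewrite logn_gt0.
rewrite -(leq_pmul2r Hpos) -Htot.
apply: leq_trans (leq_mul (leqnn _) Hchain) _.
rewrite mulnA leq_mul2r. apply/orP; right. rewrite leq_mul2l. apply/orP; right. by rewrite ltnS.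
Qed.

Lemma sum_lt_min q Q : \sum_(j < Q) (j < q : nat) = minn q Q.
Proof.
elim: Q => [|Q IH]; first by rewrite big_ord0 minn0.
rewrite big_ord_recr /= IH. case: (ltnP Q q) => H; lia.
Qed.

Lemma good_sum (l : seq nat) Q : all (fun q => q < Q) l ->
  sumn l = \sum_(j < Q) count (fun q => j.+1 <= q) l.
Proof.
elim: l => [|q l IH] /=.
  by rewrite big1 // => j _.
move=> /andP [Hq Hl]. rewrite big_split /= IH // sum_lt_min.
congr (_ + _). lia.
Qed.

Definition good n Q (d : 'I_n) := coprime n d && all (fun q => q < Q) (qs n d).

Lemma bad_le n Q :
  \sum_(d < n | coprime n d) (~~ all (fun q => q < Q) (qs n d) : nat) <=
  \sum_(d < n | coprime n d) count (fun q => Q <= q) (qs n d).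
Proof.
apply: leq_sum => d _. case Ha: (all _ _) => //=.
have : has (fun q => Q <= q) (qs n d).
  move/negbT: Ha. rewrite -has_predC. apply: sub_has => q /=. by rewrite -leqNgt.
by rewrite has_count.
Qed.

Lemma good_sum_le n Q :
  \sum_(d < n | good Q d) s n d <=
  \sum_(j < Q) \sum_(d < n | coprime n d) count (fun q => j.+1 <= q) (qs n d).
Proof.
rewrite exchange_big /=.
apply: (@leq_trans (\sum_(d < n | good Q d) \sum_(j < Q) count (fun q => j.+1 <= q) (qs n d))).
  apply: leq_sum => d /andP [_ H]. by rewrite /s qsum_qlist -(good_sum H).
rewrite [X in _ <= X](bigID (fun d : 'I_n => all (fun q => q < Q) (qs n d))) /=.
apply: leq_addr.
Qed.

Lemma totient_split n Q :
  totient n = \sum_(d < n | good Q d) 1 +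
              \sum_(d < n | coprime n d) (~~ all (fun q => q < Q) (qs n d) : nat).
Proof.
rewrite totient_count_coprime big_mkord.
rewrite (bigID (fun d : 'I_n => coprime n d)) /= [X in _ + X]big1; last by move=> d /negbTE ->.
rewrite addn0 (bigID (fun d : 'I_n => all (fun q => q < Q) (qs n d))) /=.
congr (_ + _).
  rewrite big_mkcondl [RHS]big_mkcondl. apply: eq_bigr => d _ /=.
  by rewrite /good; case: (coprime n d); case: (all (fun q => q < Q) (qs n d)).
rewrite big_mkcondr /=. apply: eq_bigr => d Hd.
by rewrite Hd; case: (all (fun q => q < Q) (qs n d)).
Qed.

Lemma pigeon n Q : 0 < \sum_(d < n | good Q d) 1 ->
  exists d : 'I_n, good Q d /\
    s n d * (\sum_(d < n | good Q d) 1) <= \sum_(d < n | good Q d) s n d.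
Proof.
move=> Hpos.
have [d0 Hd0] : exists d0 : 'I_n, good Q d0.
  move: Hpos. rewrite sum1_card => /card_gt0P [d0 Hd0]. by exists d0.
case: (arg_minnP (fun d : 'I_n => s n d) Hd0) => d Hd Hmin.
exists d; split => //.
rewrite big_distrr /= muln1. apply: leq_sum => i Hi. exact: Hmin.
Qed.

Open Scope R_scope.

Lemma INR_addn (a b : nat) : INR (a + b)%nat = INR a + INR b.
Proof. exact: plus_INR. Qed.
Lemma INR_muln (a b : nat) : INR (a * b)%nat = INR a * INR b.
Proof. exact: mult_INR. Qed.
Lemma INR_leq (a b : nat) : (a <= b)%nat -> INR a <= INR b.
Proof. move/leP; exact: le_INR. Qed.
Lemma INR_pos (a : nat) : (0 < a)%nat -> 0 < INR a.
Proof. move/ltP; exact: lt_0_INR. Qed.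

Lemma INR_div_le (m k : nat) : (0 < k)%nat -> INR (m %/ k) <= INR m / INR k.
Proof.
move=> Hk. have Hk' := INR_pos Hk.
have H : (m %/ k * k <= m)%nat by apply: leq_divM.
apply: (Rmult_le_reg_r (INR k)) => //.
rewrite /Rdiv Rmult_assoc Rinv_l ?Rmult_1_r; last by apply: Rgt_not_eq.
rewrite -INR_muln. exact: INR_leq.
Qed.

Lemma ln_le_sub1 y : 0 < y -> ln y <= y - 1.
Proof.
move=> Hy. case: (Req_dec (ln y) 0) => H.
  have : y = 1 by rewrite -(exp_ln y Hy) H exp_0.
  move=> ->. rewrite ln_1. lra.
have := exp_ineq1 (ln y) H. rewrite exp_ln //. lra.
Qed.

Lemma ln_le x y : 0 < x -> x <= y -> ln x <= ln y.
Proof.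
move=> Hx Hxy. case: (Rle_lt_or_eq_dec _ _ Hxy) => H.
  apply: Rlt_le. exact: ln_increasing.
rewrite H. lra.
Qed.

Fixpoint rsum (k : nat) (g : nat -> R) : R :=
  match k with O => 0 | S k' => rsum k' g + g k' end.

Lemma INR_sum_le (Q : nat) (F : nat -> nat) (g : nat -> R) :
  (forall j, (j < Q)%nat -> INR (F j) <= g j) -> INR (\sum_(j < Q) F j) <= rsum Q g.
Proof.
elim: Q => [|Q IH] H; first by rewrite big_ord0 /=; lra.
rewrite big_ord_recr /= INR_addn. apply: Rplus_le_compat.
  apply: IH => j Hj. apply: H. exact: ltnW.
exact: H.
Qed.

Lemma rsum_scal k c g : rsum k (fun j => c * g j) = c * rsum k g.
Proof. elim: k => [|k IH] /=; [ring | rewrite IH; ring]. Qed.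

Definition harm k := rsum k (fun j => / INR j.+1).

Lemma harm_le k : (1 <= k)%nat -> harm k <= 1 + ln (INR k).
Proof.
elim: k => [//|k IH] _.
case: k IH => [|k] IH.
  rewrite /harm /= ln_1. lra.
have IH' := IH isT.
rewrite (_ : harm k.+2 = harm k.+1 + / INR k.+2) //.
have Hk : 0 < INR k.+1 by apply: INR_pos.
have Hk2 : 0 < INR k.+2 by apply: INR_pos.
have Hl := ln_le_sub1 (Rdiv_lt_0_compat _ _ Hk Hk2).
rewrite /Rdiv ln_mult ?ln_Rinv // in Hl; last exact: Rinv_0_lt_compat.
have E : INR k.+1 / INR k.+2 - 1 = - / INR k.+2.
  rewrite (_ : INR k.+2 = INR k.+1 + 1); last by rewrite -S_INR.
  field. lra.
lra.
Qed.

Definition Ssum (n j : nat) : nat :=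
  (\sum_(d < n | coprime n d) count (fun q => j <= q) (qs n d))%nat.

Lemma term_aux A X E : 1 <= A -> 0 <= X -> 0 <= E -> E <= X / A ->
  (A + 1) * (E + 1) <= 2 * X + (A + 1).
Proof.
move=> HA HX HE H.
set Y := X / A in H.
have HY : Y * A = X by rewrite /Y; field; lra.
have HY0 : 0 <= Y by rewrite /Y; apply: Rmult_le_pos => //; apply: Rlt_le; apply: Rinv_0_lt_compat; lra.
nra.
Qed.

Lemma sumF_le n j : (0 < j)%nat -> forall U,
  INR (\sum_(a < U.+1) a.+1 * ((n %/ (j * a)) %/ a).+1)%nat <=
  2 * (INR n / INR j) * harm U + INR (U.+1 * U.+2)%nat / 2.
Proof.
move=> Hj. have Hj' := INR_pos Hj.
have HNj : 0 <= INR n / INR j by apply: Rmult_le_pos; [apply: pos_INR | apply: Rlt_le; apply: Rinv_0_lt_compat].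
elim => [|U IH].
  rewrite big_ord1 (_ : nat_of_ord (@ord0 0) = 0%nat) // muln0 !divn0 ?div0n (_ : harm 0 = 0) //. rewrite /=. lra.
rewrite (_ : (\sum_(a < U.+2) a.+1 * ((n %/ (j * a)) %/ a).+1 = \sum_(a < U.+1) a.+1 * ((n %/ (j * a)) %/ a).+1 + U.+2 * ((n %/ (j * U.+1)) %/ U.+1).+1)%nat); last by rewrite big_ord_recr.
rewrite INR_addn.
set A := INR U.+1.
have HA : 1 <= A by rewrite /A S_INR; have := pos_INR U; lra.
have Hh : harm U.+1 = harm U + / A by [].
rewrite Hh.
have Hterm : INR (U.+2 * ((n %/ (j * U.+1)) %/ U.+1).+1)%nat <= 2 * (INR n / INR j / A) + (A + 1).
  rewrite INR_muln S_INR (S_INR ((n %/ (j * U.+1)) %/ U.+1)) -/A.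
  apply: term_aux => //.
    apply: Rmult_le_pos => //. apply: Rlt_le; apply: Rinv_0_lt_compat; lra.
    exact: pos_INR.
  apply: Rle_trans (INR_div_le _ _) _ => //.
  rewrite -/A. apply: Rmult_le_compat_r.
    apply: Rlt_le; apply: Rinv_0_lt_compat; lra.
  apply: Rle_trans (INR_div_le _ _) _; first by rewrite muln_gt0 Hj.
  rewrite INR_muln -/A. right. field. split; lra.
have HB : INR (U.+2 * U.+3)%nat = INR (U.+1 * U.+2)%nat + 2 * (A + 1).
  rewrite !INR_muln !S_INR /A S_INR. ring.
rewrite HB.
have : 2 * (INR n / INR j) * (harm U + / A) = 2 * (INR n / INR j) * harm U + 2 * (INR n / INR j / A).
  rewrite /Rdiv. ring.
move=> ->. lra.
Qed.

Lemma S_real n j : (2 <= n)%nat -> (0 < j)%nat ->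
  INR (Ssum n j) <= INR n / INR j * (32 + 8 * ln (INR n)).
Proof.
move=> Hn Hj.
have Hj' := INR_pos Hj.
have Hn' : 0 < INR n by apply: INR_pos; apply: leq_trans Hn.
have HNj : 0 <= INR n / INR j by apply: Rmult_le_pos; [apply: pos_INR | apply: Rlt_le; apply: Rinv_0_lt_compat].
have Hln : 0 <= ln (INR n).
  rewrite -ln_1. apply: ln_le; first lra.
  have := @INR_leq 1 n (leq_trans (isT : (1 <= 2)%nat) Hn). rewrite /=. lra.
case: (leqP j n) => Hjn; last first.
  rewrite (_ : Ssum n j = 0%nat); last first.
    rewrite /Ssum big1 // => d _.
    rewrite (eq_in_count (a2 := pred0)) ?count_pred0 // => q Hq /=.
    have := qlist_le Hq. rewrite (maxn_idPl (ltnW (ltn_ord d))) => Hqn.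
    apply/negbTE. rewrite -ltnNge. exact: leq_ltn_trans Hqn Hjn.
  rewrite /=. apply: Rmult_le_pos => //. lra.
set m := n %/ j.
have Hm : (1 <= m)%nat by rewrite /m divn_gt0.
have Hmn : (m <= n)%nat by apply: leq_div.
have [Hs1 Hs2] := Nat.sqrt_spec m (Nat.le_0_l m).
set s := Nat.sqrt m in Hs1 Hs2.
set U := s.+1.
have Hceil := ltn_ceil n Hj. rewrite -/m in Hceil.
have HU : (n <= U * U * j)%nat by rewrite /U; nia.
have HUn : (U <= n)%nat by rewrite /U; nia.
have HUU : (U.+1 * U.+2 <= 12 * m)%nat by rewrite /U; nia.
have H1 : INR (Ssum n j) <= 4 * INR (\sum_(a < U.+1) a.+1 * ((n %/ (j * a)) %/ a).+1)%nat.
  apply: Rle_trans (INR_leq (S_bound Hj HU)) _. rewrite INR_muln.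
  have -> : INR 4 = 4 by rewrite /=; ring.
  lra.
have H2 := sumF_le n Hj U.
have H3 : harm U <= 1 + ln (INR n).
  apply: Rle_trans (harm_le _) _ => //. apply: Rplus_le_compat_l.
  apply: ln_le; [apply: INR_pos => // | exact: INR_leq].
have H5 : INR (U.+1 * U.+2)%nat <= 12 * (INR n / INR j).
  apply: Rle_trans (INR_leq HUU) _. rewrite INR_muln.
  have -> : INR 12 = 12 by rewrite /=; ring.
  apply: Rmult_le_compat_l; first lra.
  exact: INR_div_le.
have H6 : INR n / INR j * harm U <= INR n / INR j * (1 + ln (INR n)).
  exact: Rmult_le_compat_l.
nra.
Qed.

Lemma exp1_lt3 : exp 1 < 3.
Proof.
set e := exp (/8).
have He : 0 < e by apply: exp_pos.
have H1 : 1 + - / 8 < exp (- / 8) by apply: exp_ineq1; lra.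
rewrite exp_Ropp -/e in H1.
have He8 : e < 8 / 7.
  have : 7 / 8 < / e by lra.
  move=> H. have : / (/ e) < / (7 / 8) by apply: Rinv_lt_contravar => //; apply: Rmult_lt_0_compat; [lra | apply: Rinv_0_lt_compat; lra].
  rewrite Rinv_inv. have -> : / (7 / 8) = 8 / 7 by field. done.
have E : exp 1 = e * e * e * e * e * e * e * e.
  rewrite /e -!exp_plus. congr exp. field.
rewrite E.
have He1 : e * e < 8/7 * (8/7) by nra.
have He2 : e * e * e * e < 8/7 * (8/7) * (8/7 * (8/7)) by nra.
have He3 : e * e * e * e * (e * e * e * e) < 8/7 * (8/7) * (8/7 * (8/7)) * (8/7 * (8/7) * (8/7 * (8/7))).
  apply: Rmult_le_0_lt_compat; nra.
have -> : e * e * e * e * e * e * e * e = e * e * e * e * (e * e * e * e) by ring.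
lra.
Qed.

Lemma ln3_gt1 : 1 < ln 3.
Proof.
rewrite -{1}(ln_exp 1). apply: ln_increasing; [apply: exp_pos | exact: exp1_lt3].
Qed.

Lemma ln2_lt1 : ln 2 < 1.
Proof.
rewrite -(ln_exp 1). apply: ln_increasing; first lra.
have := exp_ineq1 1. lra.
Qed.

Lemma expn_pow (a b : nat) : expn a b = Nat.pow a b.
Proof. elim: b => [//|b IH]. by rewrite expnS IH. Qed.

Lemma INR_expn2 k : INR (expn 2 k) = 2 ^ k.
Proof. by rewrite expn_pow pow_INR. Qed.

Theorem theorem1p2 :
  exists c : R, forall n : nat, leq 3 n ->
    exists d : nat, [&& leq 1 d, leq d (subn n 1) & coprime n d] /\
      INR (s n d) <= c * (INR n / INR (totient n)) * ln (INR n) * ln (ln (INR n)).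
Proof.
set dl := ln (ln 3).
have Hdl : 0 < dl by rewrite /dl -ln_1; apply: ln_increasing; [lra | exact: ln3_gt1].
exists (80 * (84 / dl + 2)).
move=> n Hn3.
have Hn2 : (2 <= n)%nat by apply: leq_trans Hn3.
have Hn0 : (0 < n)%nat by apply: leq_trans Hn3.
have Hn' : 0 < INR n by apply: INR_pos.
set L := ln (INR n).
have HL3 : ln 3 <= L.
  apply: ln_le; first lra. have := @INR_leq 3 n Hn3. rewrite /=. lra.
have HL1 : 1 < L by have := ln3_gt1; lra.
have HlnL : dl <= ln L by apply: ln_le; [have := ln3_gt1; lra | exact: HL3].
set Phi := totient n.
have HPhi : (0 < Phi)%nat by rewrite /Phi totient_gt0.
have HPhi' : 0 < INR Phi by apply: INR_pos.
set m := (trunc_log 2 n).+1.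
have Hm0 : (0 < m)%nat by [].
have Hm' : 0 < INR m by apply: INR_pos.
have F2 : INR n <= INR Phi * INR m.
  rewrite -INR_muln. apply: INR_leq. exact: totient_lower.
have F3 : L <= INR m.
  have H : (n < expn 2 m)%nat by apply: trunc_log_ltn.
  have H' : INR n <= INR (expn 2 m) by apply: INR_leq; apply: ltnW.
  rewrite INR_expn2 in H'.
  have : L <= ln (2 ^ m) by apply: ln_le.
  rewrite ln_pow; last lra.
  have := ln2_lt1. have := ln_lt_2. nra.
have F4 : INR m <= 3 * L.
  have H : (expn 2 (trunc_log 2 n) <= n)%nat by apply: trunc_logP.
  have H' : 2 ^ (trunc_log 2 n) <= INR n by rewrite -INR_expn2; apply: INR_leq.
  have : ln (2 ^ (trunc_log 2 n)) <= L by apply: ln_le => //; apply: pow_lt; lra.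
  rewrite ln_pow; last lra.
  have Hm : INR m = INR (trunc_log 2 n) + 1 by rewrite /m S_INR.
  have := ln_lt_2. have := pos_INR (trunc_log 2 n). nra.
set Q := (80 * m * m)%nat.
have HQ0 : (0 < Q)%nat by rewrite /Q !muln_gt0 Hm0.
have HQ' : 0 < INR Q by apply: INR_pos.
have HQE : INR Q = 80 * INR m * INR m.
  rewrite /Q !INR_muln. have -> : INR 80 = 80 by rewrite /=; ring. done.
have Hbad : INR (Ssum n Q) <= INR Phi / 2.
  apply: Rle_trans (S_real Hn2 HQ0) _.
  have H1 : INR n / INR Q * (32 + 8 * L) <= INR n / INR Q * (40 * L).
    apply: Rmult_le_compat_l; last lra.
    apply: Rmult_le_pos; [lra | apply: Rlt_le; apply: Rinv_0_lt_compat; lra].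
  apply: Rle_trans H1 _.
  rewrite HQE.
  have -> : INR n / (80 * INR m * INR m) * (40 * L) = INR n / (2 * INR m) * (L / INR m).
    field. lra.
  have H2 : L / INR m <= 1.
    apply: (Rmult_le_reg_r (INR m)) => //. rewrite /Rdiv Rmult_assoc Rinv_l; lra.
  have H3 : INR n / (2 * INR m) <= INR Phi / 2.
    apply: (Rmult_le_reg_r (2 * INR m)); first lra.
    have -> : INR n / (2 * INR m) * (2 * INR m) = INR n by field; lra.
    have -> : INR Phi / 2 * (2 * INR m) = INR Phi * INR m by field.
    exact: F2.
  have H4 : 0 <= INR n / (2 * INR m).
    apply: Rmult_le_pos; [lra | apply: Rlt_le; apply: Rinv_0_lt_compat; lra].
  have H5 : 0 <= L / INR m.
    apply: Rmult_le_pos; [lra | apply: Rlt_le; apply: Rinv_0_lt_compat; lra].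
  nra.
set G := (\sum_(d < n | good Q d) 1)%nat.
have HG : INR Phi / 2 <= INR G.
  have Hs := totient_split n Q. rewrite -/Phi -/G in Hs.
  have Hb := bad_le n Q.
  have : INR Phi <= INR G + INR (Ssum n Q).
    rewrite -INR_addn. apply: INR_leq. rewrite Hs leq_add2l. exact: Hb.
  lra.
have HG0 : (0 < G)%nat.
  have H : INR 0 < INR G by change (INR 0) with 0; lra.
  apply/ltP. exact: INR_lt H.
have HG' : 0 < INR G by apply: INR_pos.
have [d [Hgood Hd]] := pigeon HG0.
exists d. split.
  move: Hgood => /andP [Hco _]. rewrite Hco andbT.
  have Hd1 : (0 < d)%nat.
    rewrite lt0n. apply/negP => /eqP Hd0. move: Hco. rewrite Hd0 /coprime gcdn0 => /eqP Hn1.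
    move: Hn3. by rewrite Hn1.
  have := ltn_ord d. rewrite Hd1 /=. lia.
have Hsum : INR (\sum_(d < n | good Q d) s n d)%nat <= 40 * L * INR n * (1 + ln (INR Q)).
  apply: Rle_trans (INR_leq (good_sum_le n Q)) _.
  have Hsl : INR (\sum_(j < Q) Ssum n j.+1)%nat <= rsum Q (fun j => (40 * L * INR n) * / INR j.+1).
    apply: (@INR_sum_le Q (fun j => Ssum n j.+1)) => j Hj. apply: Rle_trans (S_real Hn2 (ltn0Sn j)) _.
    have Hj' : 0 < INR j.+1 by apply: INR_pos.
    have -> : INR n / INR j.+1 * (32 + 8 * L) = (INR n * / INR j.+1) * (32 + 8 * L) by [].
    have -> : 40 * L * INR n * / INR j.+1 = (INR n * / INR j.+1) * (40 * L) by ring.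
    apply: Rmult_le_compat_l; last lra.
    apply: Rmult_le_pos; [lra | apply: Rlt_le; apply: Rinv_0_lt_compat; lra].
  apply: Rle_trans Hsl _.
  rewrite rsum_scal -/(harm Q).
  apply: Rmult_le_compat_l; first by apply: Rmult_le_pos; lra.
  exact: harm_le.
have HlnQ : 1 + ln (INR Q) <= (84 / dl + 2) * ln L.
  rewrite HQE ln_mult; [|lra|lra]. rewrite ln_mult; [|lra|lra].
  have H80 : ln 80 <= 79 by have := @ln_le_sub1 80; lra.
  have Hlm : ln (INR m) <= ln 3 + ln L.
    rewrite -ln_mult; [|lra|lra]. apply: ln_le => //.
  have H3 : ln 3 <= 2 by have := @ln_le_sub1 3; lra.
  have : 84 <= 84 / dl * ln L.
    apply: (Rmult_le_reg_r dl) => //.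
    have -> : 84 / dl * ln L * dl = 84 * ln L by field; lra.
    have := ln3_gt1. nra.
  lra.
have HsG : INR (s n d) * INR G <= 40 * L * INR n * (1 + ln (INR Q)).
  rewrite -INR_muln. apply: Rle_trans Hsum. exact: INR_leq.
have Hs0 : 0 <= INR (s n d) by apply: pos_INR.
have HlnL0 : 0 < ln L by lra.
set K := 84 / dl + 2.
have HK : 0 < K by rewrite /K; apply: Rplus_le_lt_0_compat; [apply: Rlt_le; apply: Rdiv_lt_0_compat; lra | lra].
have Step1 : INR (s n d) * (INR Phi / 2) <= 40 * L * INR n * (K * ln L).
  apply: Rle_trans (_ : INR (s n d) * (INR Phi / 2) <= INR (s n d) * INR G) _.
    exact: Rmult_le_compat_l.
  apply: Rle_trans HsG _. apply: Rmult_le_compat_l => //.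
  apply: Rmult_le_pos; [lra | apply: pos_INR].
apply: (Rmult_le_reg_r (INR Phi / 2)); first lra.
apply: Rle_trans Step1 _.
right. rewrite /K. field. split; lra.
Qed.
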